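(* For every $a_1,\dots,a_{2^n}\in F$ and all distinct $w,w'\in F^d$: (1) there is a prover strategy $r$ such that Alice's output equals $(\tilde A(w),\tilde A(w'))$ with probability $1$; (2) for every prover strategy $r$, Alice's output lies in $\{(\tilde A(w),\tilde A(w')),Err\}$ with probability at least $1-1/n^{c-1.5}$.
   Context: Parameters. - $n>4$ is a power of $2$ with $\log_2 n$ even, and $d:=2n/\log_2 n$ is assumed to be an integer. - $F$ is a finite field with $|F|=2^a=n^c$, where $c\ge 2$ is a constant integer. - $H\subset F$ is a fixed subset with $|H|=\sqrt n$, and $\pi:H^d\to[2^n]$ is a fixed bijection. Low degree extension. - For $a_1,\dots,a_{2^n}\in F$, define $A(z)=a_{\pi(z)}$ on $H^d$. - $\tilde A:F^d\to F$ is the unique polynomial of degree at most $|H|-1$ in each variable extending $A$. Its total degree is $<n^{1.5}$. - $|\Psi(a_1,\dots,a_{2^n})\rangle=|F|^{-d/2}\sum_{z\in F^d}|z_1\rangle\cdots|z_d\rangle|\tilde A(z)\rangle$. Measuring it in the standard basis yields a uniformly random $z\in F^d$ together with $\tilde A(z)$. Two-value retrieval protocol. - Alice measures, obtaining a uniform $z\in F^d$ and $\tilde A(z)$. - She sends to Merlin the affine subspace $P=\{w+(z-w)t_1+(w'-w)t_2: t_1,t_2\in F\}$. This is a plane, or a line if $z,w,w'$ are collinear. - A prover strategy $r$ is a deterministic assignment, to each affine subspace $P$ of dimension $1$ or $2$ containing $w,w'$, of a function $g_P:P\to F$. - Let $g(t_1,t_2)=g_P(w+(z-w)t_1+(w'-w)t_2)$.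 Alice outputs $Err$ if $g$ is not a polynomial of total degree $<n^{1.5}$ in $(t_1,t_2)$, or if $g(1,0)\ne\tilde A(z)$. Otherwise she outputs $(g(0,0),g(0,1))$. *)

(* Defs.v *)
From HB Require Import structures.
From mathcomp Require Import all_boot all_order all_algebra.
From mathcomp Require Import mpoly.
From Stdlib Require Import ClassicalEpsilon.
Set Implicit Arguments. Unset Strict Implicit. Unset Printing Implicit Defensive.
Import Order.TTheory GRing.Theory Num.Theory.
Local Open Scope ring_scope.

(* Classical boolean reflection of a proposition (used for the event
   "g is a polynomial of total degree < N", which quantifies over polynomials). *)
Definition decP (P : Prop) : bool :=
  if excluded_middle_informative P then true else false.

Definition coords (F : fieldType) (d : nat) (z : 'rV[F]_d) : 'I_d -> F :=
  fun i => z ord0 i.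

Definition cube (F : finFieldType) (d : nat) (H : {set F}) : {set 'rV[F]_d} :=
  [set z : 'rV[F]_d | [forall i, z ord0 i \in H]].

Definition is_LDE (F : finFieldType) (d N : nat) (H : {set F})
    (pi : 'rV[F]_d -> 'I_N) (a : 'I_N -> F) (P : {mpoly F[d]}) : Prop :=
  (forall m, m \in msupp P -> forall i, (m i <= #|H|.-1)%N) /\
  (forall z, z \in cube d H -> P.@[coords z] = a (pi z)).

Definition plane (F : finFieldType) (d : nat) (w w' z : 'rV[F]_d)
  : {set 'rV[F]_d} :=
  [set w + t.1 *: (z - w) + t.2 *: (w' - w) | t in [set: F * F]].

(* A (deterministic) prover strategy: to each affine subspace (given as a
   set of points) it assigns a function g_P (only its values on P matter). *)
Definition strategy (F : finFieldType) (d : nat) :=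
  {set 'rV[F]_d} -> 'rV[F]_d -> F.

Definition gfun (F : finFieldType) (d : nat) (r : strategy F d)
    (w w' z : 'rV[F]_d) (t1 t2 : F) : F :=
  r (plane w w' z) (w + t1 *: (z - w) + t2 *: (w' - w)).

Definition poly2_deg_lt (F : fieldType) (D : nat) (g : F -> F -> F) : Prop :=
  exists q : {mpoly F[2]},
    (forall m, m \in msupp q -> (mdeg m < D)%N) /\
    (forall t1 t2, g t1 t2 = q.@[[ffun i : 'I_2 => if i == ord0 then t1 else t2]]).

(* Alice's output: None = Err, Some (x, y) = output (x, y).
   Atil is the low-degree extension, D the degree bound n^1.5. *)
Definition alice_output (F : finFieldType) (d : nat) (D : nat)
    (Atil : 'rV[F]_d -> F) (r : strategy F d) (w w' z : 'rV[F]_d)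
  : option (F * F) :=
  let g := gfun r w w' z in
  if decP (poly2_deg_lt D g) && (g 1 0 == Atil z)
  then Some (g 0 0, g 0 1) else None.

Definition prob_z (F : finFieldType) (d : nat) (E : pred 'rV[F]_d) : rat :=
  (#|[set z : 'rV[F]_d | E z]|%:R / (#|F| ^ d)%:R)%R.

(* Main.v *)
From HB Require Import structures.
From mathcomp Require Import all_boot all_order all_algebra.
From mathcomp Require Import mpoly ring zify.
Require Import Defs.
From Stdlib Require Import ClassicalEpsilon.
Import Order.TTheory GRing.Theory Num.Theory.
Set Implicit Arguments. Unset Strict Implicit. Unset Printing Implicit Defensive.
Local Open Scope ring_scope.

Lemma msizeM_sharp (n : nat) (R : nzRingType) (p q : {mpoly R[n]}) :
  (msize (p * q) <= (msize p + msize q).-1)%N.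
Proof.
have [->|nz_p ] := eqVneq p 0; first by rewrite mul0r msize0.
have [->|nz_q ] := eqVneq q 0; first by rewrite mulr0 msize0.
have [->|nz_pq] := eqVneq (p * q) 0; first by rewrite msize0.
rewrite -!mlead_deg // addSn /=.
have /lemc_mdeg := mleadM_le p q; rewrite mdegD; lia.
Qed.

Lemma msize_le_mdeg (n : nat) (R : nzRingType) (p : {mpoly R[n]}) (D : nat) :
  (forall m, m \in msupp p -> (mdeg m < D)%N) -> (msize p <= D)%N.
Proof. by move=> H; rewrite msizeE; apply/bigmax_leqP_seq => m mp _; exact: H. Qed.

Lemma msize_exp (n : nat) (R : nzRingType) (p : {mpoly R[n]}) k :
  (msize p <= 2)%N -> (msize (p ^+ k) <= k.+1)%N.
Proof.
move=> Hp; elim: k => [|k IH]; first by rewrite expr0 msize1.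
rewrite exprS; apply: leq_trans (msizeM_sharp _ _) _.
have := leq_add Hp IH; lia.
Qed.

Lemma msize_prod_pow (n k : nat) (R : nzRingType) (lq : 'I_n -> {mpoly R[k]})
   (m : 'X_{1..n}) : (forall i, msize (lq i) <= 2)%N ->
  (msize (\prod_(i < n) lq i ^+ m i) <= (mdeg m).+1)%N.
Proof.
move=> Hl; rewrite mdegE.
apply: (big_ind2 (fun x y => msize x <= y.+1)%N).
- by rewrite msize1.
- move=> x1 y1 x2 y2 h1 h2; apply: leq_trans (msizeM_sharp _ _) _.
  have := leq_add h1 h2; lia.
- by move=> i _; exact: msize_exp.
Qed.

Lemma msize_comp (n k : nat) (R : nzRingType) (p : {mpoly R[n]})
  (lq : n.-tuple {mpoly R[k]}) :
  (forall i, msize (tnth lq i) <= 2)%N -> (msize (p \mPo lq) <= msize p)%N.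
Proof.
move=> Hl; rewrite comp_mpolyEX big_seq.
apply: (big_ind (fun q => msize q <= msize p)%N).
- by rewrite msize0.
- move=> x y hx hy; apply: leq_trans (msizeD_le _ _) _; by rewrite geq_max hx hy.
- move=> m hm; apply: leq_trans (msizeZ_le _ _) _; rewrite comp_mpolyX.
  apply: leq_trans (msize_prod_pow _ Hl) (msize_mdeg_lt hm).
Qed.

Lemma size_mmap_poly (F : fieldType) n (Q : {mpoly F[n]}) (h : 'I_n -> {poly F}) :
  (forall i, size (h i) <= 2)%N -> (size (mmap polyC h Q) <= msize Q)%N.
Proof.
move=> Hh; rewrite /mmap big_seq.
apply: (big_ind (fun q : {poly F} => size q <= msize Q)%N).
- by rewrite size_poly0.
- move=> x y hx hy; apply: leq_trans (size_polyD _ _) _; by rewrite geq_max hx hy.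
- move=> m hm; rewrite mul_polyC; apply: leq_trans (size_scale_leq _ _) _.
  apply: leq_trans _ (msize_mdeg_lt hm); rewrite /mmap1 mdegE.
  apply: (big_ind2 (fun (x : {poly F}) y => size x <= y.+1)%N).
  + by rewrite size_poly1.
  + move=> x1 y1 x2 y2 h1 h2; apply: leq_trans (size_polyMleq _ _) _.
    have := leq_add h1 h2; lia.
  + move=> i _; apply: leq_trans (size_poly_exp_leq _ _) _.
    have := Hh i; nia.
Qed.

Lemma horner_mmap (F : fieldType) n (Q : {mpoly F[n]}) (h : 'I_n -> {poly F}) x :
  (mmap polyC h Q).[x] = Q.@[fun i => (h i).[x]].
Proof.
rewrite /mmap mevalE horner_sum; apply: eq_bigr => m _.
rewrite hornerM hornerC /mmap1 horner_prod; congr (_ * _).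
by apply: eq_bigr => i _; rewrite horner_exp.
Qed.

Lemma roots_card (F : finFieldType) (p : {poly F}) :
  p != 0 -> (#|[set x | p.[x] == 0%R]| <= (size p).-1)%N.
Proof.
move=> hp.
have := @max_poly_roots _ p (enum [set x | p.[x] == 0%R]) hp.
rewrite enum_uniq cardE => H.
have : (size (enum [set x | p.[x] == 0%R]) < size p)%N.
  by apply: H => //; apply/allP => x; rewrite mem_enum inE.
lia.
Qed.

Lemma card_pairs (A B : finType) (P : A -> B -> bool) :
  #|[set x : A * B | P x.1 x.2]| = (\sum_(a : A) #|[set b | P a b]|)%N.
Proof.
rewrite -sum1_card.
under [RHS]eq_bigr => a _ do rewrite -sum1_card.
rewrite pair_big_dep /=; apply: eq_bigl => -[a b] /=; by rewrite !inE.
Qed.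

Definition ev2 (F : fieldType) (t1 t2 : F) : {ffun 'I_2 -> F} :=
  [ffun i : 'I_2 => if i == ord0 then t1 else t2].

Definition i1 : 'I_2 := ord_max.

Definition aff (F : fieldType) (c a b : F) : {mpoly F[2]} :=
  c%:MP + a *: 'X_ord0 + b *: 'X_i1.

Lemma msize_aff (F : fieldType) (c a b : F) : (msize (aff c a b) <= 2)%N.
Proof.
rewrite /aff; apply: leq_trans (msizeD_le _ _) _; rewrite geq_max; apply/andP; split.
  apply: leq_trans (msizeD_le _ _) _; rewrite geq_max; apply/andP; split.
    by rewrite msizeC; case: (c != 0).
  by apply: leq_trans (msizeZ_le _ _) _; rewrite msizeX mdeg1.
by apply: leq_trans (msizeZ_le _ _) _; rewrite msizeX mdeg1.
Qed.

Lemma meval_aff (F : fieldType) (c a b : F) t1 t2 :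
  (aff c a b).@[ev2 t1 t2] = c + a * t1 + b * t2.
Proof. by rewrite /aff !mevalD mevalC !mevalZ !mevalXU !ffunE. Qed.

Lemma poly2_subst (F : fieldType) (D : nat) (g g' : F -> F -> F)
   (c1 a1 b1 c2 a2 b2 : F) :
  poly2_deg_lt D g ->
  (forall t1 t2, g' t1 t2 = g (c1 + a1 * t1 + b1 * t2) (c2 + a2 * t1 + b2 * t2)) ->
  poly2_deg_lt D g'.
Proof.
case=> q [hq he] hg.
exists (q \mPo [tuple aff c1 a1 b1; aff c2 a2 b2]); split.
  move=> m hm; apply: leq_trans (msize_mdeg_lt hm) _.
  apply: leq_trans (msize_comp _ _) (msize_le_mdeg hq).
  by move=> i; rewrite (tnth_nth 0); case: i => [[|[|//]] Hi] /=; exact: msize_aff.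
move=> t1 t2; rewrite hg he comp_mpoly_meval; apply: meval_eq => i.
rewrite ffunE (tnth_nth 0); case: i => [[|[|//]] Hi] /=; by rewrite meval_aff.
Qed.

Lemma count2 (F : finFieldType) (Q : {mpoly F[2]}) (D : nat) :
  (msize Q <= D)%N -> (Q.@[ev2 0 0] != 0) || (Q.@[ev2 0 1] != 0) ->
  (#|[set t : F * F | (t.1 != 0%R) && (Q.@[ev2 t.1 t.2] == 0%R)]| <= D.-1 * #|F|)%N.
Proof.
move=> hQ hnz.
have [al hal] : exists al : F, Q.@[ev2 0 al] != 0.
  by case/orP: hnz => h; [exists 0 | exists 1].
pose h (v : F) (i : 'I_2) : {poly F} := if i == ord0 then 'X else al%:P + v *: 'X.
pose p (v : F) := mmap polyC (h v) Q.
have hp v x : (p v).[x] = Q.@[ev2 x (al + v * x)].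
  rewrite horner_mmap; apply: meval_eq => i; rewrite ffunE /h.
  case: (i == ord0); by rewrite ?hornerX ?hornerD ?hornerC ?hornerZ ?hornerX.
have hp0 v : p v != 0.
  apply: contraNneq hal => e; have := hp v 0; rewrite e horner0 mulr0 addr0.
  by move<-.
have hsz v : (size (p v) <= D)%N.
  apply: leq_trans (size_mmap_poly _ _) hQ => i; rewrite /h.
  case: (i == ord0); first by rewrite size_polyX.
  apply: leq_trans (size_polyD _ _) _; rewrite geq_max size_polyC.
  apply/andP; split; first by case: (al != 0).
  by apply: leq_trans (size_scale_leq _ _) _; rewrite size_polyX.
pose S2 := [set x : F * F | (p x.1).[x.2] == 0].
pose f (x : F * F) := (x.2, al + x.2 * x.1).
apply: (@leq_trans #|f @: S2|).
  apply: subset_leq_card; apply/subsetP => -[t1 t2]; rewrite inE /= => /andP [ht1 hq].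
  apply/imsetP; exists ((t2 - al) / t1, t1).
    rewrite inE /= hp; have -> : al + (t2 - al) / t1 * t1 = t2 by field.
    by [].
  rewrite /f /=; congr (_, _); by field.
apply: leq_trans (leq_imset_card _ _) _.
rewrite /S2 (card_pairs (fun a b => (p a).[b] == 0)).
have hr a : (#|[set b | (p a).[b] == 0%R]| <= D.-1)%N.
  apply: leq_trans (roots_card (hp0 a)) _; rewrite -!subn1; exact: leq_sub2r (hsz a).
apply: leq_trans; first by apply: leq_sum => a _; exact: hr a.
by rewrite sum_nat_const mulnC.
Qed.

Definition pt (F : fieldType) d (w w' z : 'rV[F]_d) (t1 t2 : F) : 'rV[F]_d :=
  w + t1 *: (z - w) + t2 *: (w' - w).

Lemma pt_comp (F : fieldType) d (w w' z : 'rV[F]_d) s u a b :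
  pt w w' (pt w w' z s u) a b = pt w w' z (s * a) (u * a + b).
Proof. apply/rowP => i; rewrite !mxE; ring. Qed.

Lemma pt10 (F : fieldType) d (w w' z : 'rV[F]_d) : pt w w' z 1 0 = z.
Proof. apply/rowP => i; rewrite !mxE; ring. Qed.
Lemma pt00 (F : fieldType) d (w w' z : 'rV[F]_d) : pt w w' z 0 0 = w.
Proof. apply/rowP => i; rewrite !mxE; ring. Qed.
Lemma pt01 (F : fieldType) d (w w' z : 'rV[F]_d) : pt w w' z 0 1 = w'.
Proof. apply/rowP => i; rewrite !mxE; ring. Qed.

Lemma plane_pt (F : finFieldType) d (w w' z : 'rV[F]_d) s u :
  s != 0 -> plane w w' (pt w w' z s u) = plane w w' z.
Proof.
move=> hs; apply/setP => x; apply/imsetP/imsetP => -[[t1 t2] _ ->] /=.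
  exists (s * t1, u * t1 + t2); rewrite ?inE //=.
  exact: (pt_comp w w' z s u t1 t2).
exists (t1 / s, t2 - u * (t1 / s)); rewrite ?inE //=.
have := pt_comp w w' z s u (t1 / s) (t2 - u * (t1 / s)); rewrite /pt => ->.
congr (_ + _ *: _ + _ *: _); field; exact: hs.
Qed.

Lemma gfun_pt (F : finFieldType) d (r : strategy F d) (w w' z : 'rV[F]_d) s u a b :
  s != 0 -> gfun r w w' (pt w w' z s u) a b = gfun r w w' z (s * a) (u * a + b).
Proof.
move=> hs; rewrite /gfun plane_pt //.
by have := pt_comp w w' z s u a b; rewrite /pt => ->.
Qed.

Lemma honest (F : fieldType) d (w w' z : 'rV[F]_d) (Pm : {mpoly F[d]}) :
  exists Hz : {mpoly F[2]}, (msize Hz <= msize Pm)%N /\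
    forall t1 t2, Hz.@[ev2 t1 t2] = Pm.@[coords (pt w w' z t1 t2)].
Proof.
exists (Pm \mPo [tuple aff (w ord0 i) (z ord0 i - w ord0 i) (w' ord0 i - w ord0 i) | i < d]).
split.
  by apply: msize_comp => i; rewrite tnth_mktuple; exact: msize_aff.
move=> t1 t2; rewrite comp_mpoly_meval; apply: meval_eq => i.
rewrite tnth_mktuple meval_aff /coords /pt !mxE; ring.
Qed.

Lemma poly2_of (F : fieldType) (D : nat) (g : F -> F -> F) (Q : {mpoly F[2]}) :
  (msize Q <= D)%N -> (forall t1 t2, g t1 t2 = Q.@[ev2 t1 t2]) -> poly2_deg_lt D g.
Proof.
move=> hQ he; exists Q; split => // m hm.
exact: leq_trans (msize_mdeg_lt hm) hQ.
Qed.

Definition Tset (F : finFieldType) d (w w' z : 'rV[F]_d) : {set 'rV[F]_d} :=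
  [set pt w w' z t.1 t.2 | t in [set t : F * F | t.1 != 0]].

Lemma T_sym (F : finFieldType) d (w w' z z' : 'rV[F]_d) :
  z' \in Tset w w' z -> z \in Tset w w' z'.
Proof.
case/imsetP => -[s u]; rewrite inE /= => hs ->.
apply/imsetP; exists (s^-1, - (u / s)); first by rewrite inE /= invr_eq0.
rewrite pt_comp /= -[LHS](pt10 w w' z); congr pt; field; exact: hs.
Qed.

Definition indepb (F : finFieldType) d (w w' z : 'rV[F]_d) : bool :=
  [forall t : F * F, (t.1 *: (z - w) + t.2 *: (w' - w) == 0) ==> (t == (0, 0))].

Lemma card_T (F : finFieldType) d (w w' z : 'rV[F]_d) :
  indepb w w' z -> #|Tset w w' z| = (#|F| * #|F|.-1)%N.
Proof.
move=> hi; rewrite card_in_imset.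
  have -> : [set t : F * F | t.1 != 0] = setX [set~ 0] setT.
    by apply/setP => -[a b]; rewrite !inE /= andbT.
  by rewrite cardsX cardsC1 cardsT mulnC.
move=> [a b] [a' b'] _ _ /= e.
have h : (a - a') *: (z - w) + (b - b') *: (w' - w) == 0.
  have -> : (a - a') *: (z - w) + (b - b') *: (w' - w) = pt w w' z a b - pt w w' z a' b'.
    by apply/rowP => i; rewrite !mxE; ring.
  by rewrite e subrr.
move/forallP: hi => /(_ (a - a', b - b')) /implyP /(_ h).
by rewrite xpair_eqE !subr_eq0 => /andP [/eqP -> /eqP ->].
Qed.

Lemma card_nonindep (F : finFieldType) d (w w' : 'rV[F]_d) :
  w != w' -> (#|[set z | ~~ indepb w w' z]| <= #|F|)%N.
Proof.
move=> hww.
apply: (@leq_trans #|[set w + t *: (w' - w) | t in [set: F]]|); last first.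
  by apply: leq_trans (leq_imset_card _ _) _; rewrite cardsT.
apply: subset_leq_card; apply/subsetP => z; rewrite inE negb_forall => /existsP [[s u]].
rewrite negb_imply /= xpair_eqE => /andP [/eqP e hne].
have [s0|s0] := eqVneq s 0.
  move: e hne; rewrite s0 scale0r add0r eqxx /= => /eqP; rewrite scaler_eq0 subr_eq0.
  by rewrite [w' == w]eq_sym (negbTE hww) orbF => /eqP ->; rewrite eqxx.
apply/imsetP; exists (- (u / s)); first by rewrite inE.
have e2 : z - w = (- (u / s)) *: (w' - w).
  have -> : z - w = s^-1 *: (s *: (z - w) + u *: (w' - w)) - (u / s) *: (w' - w).
    apply/rowP => i; rewrite !mxE; field; exact: s0.
  by rewrite e scaler0 add0r scaleNr.
by rewrite -e2 addrC subrK.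
Qed.

Definition badp (F : finFieldType) d (D : nat) (Atil : 'rV[F]_d -> F)
   (r : strategy F d) (w w' z : 'rV[F]_d) : bool :=
  [&& decP (poly2_deg_lt D (gfun r w w' z)), gfun r w w' z 1 0 == Atil z &
      (gfun r w w' z 0 0, gfun r w w' z 0 1) != (Atil w, Atil w')].

Lemma decPT (P : Prop) : decP P -> P.
Proof. by rewrite /decP; case: excluded_middle_informative. Qed.

Lemma decPI (P : Prop) : P -> decP P.
Proof. by rewrite /decP; case: excluded_middle_informative. Qed.

Lemma perz (F : finFieldType) d (w w' : 'rV[F]_d) (r : strategy F d)
   (Pm : {mpoly F[d]}) (D : nat) :
  (msize Pm <= D)%N -> forall z,
  (#|[set x | badp D (fun y => Pm.@[coords y]) r w w' x] :&: Tset w w' z|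
     <= D.-1 * #|F|)%N.
Proof.
move=> hP z.
have [->|[z0 hz0]] := set_0Vmem ([set x | badp D (fun y => Pm.@[coords y]) r w w' x] :&: Tset w w' z).
  by rewrite cards0.
move: hz0; rewrite inE => /andP [hb0 /imsetP [[s0 u0]]]; rewrite inE /= => hs0 e0.
rewrite inE in hb0; case/and3P: hb0 => hd0 h10 hne0.
have hG : poly2_deg_lt D (gfun r w w' z).
  apply: (poly2_subst (g := gfun r w w' z0) (c1:=0) (a1:=s0^-1) (b1:=0) (c2:=0)
            (a2:= -(u0/s0)) (b2:=1)); first exact: decPT hd0.
  move=> t1 t2; rewrite e0 gfun_pt //; apply: (f_equal2 (gfun r w w' z)); field; exact: hs0.
case: hG => G [hGd hGe].
have [Hz [hHd hHe]] := honest w w' z Pm.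
pose Q := G - Hz.
have hQd : (msize Q <= D)%N.
  apply: leq_trans (msizeD_le _ _) _; rewrite msizeN geq_max (msize_le_mdeg hGd).
  exact: leq_trans hHd hP.
have hQe t1 t2 : Q.@[ev2 t1 t2] = gfun r w w' z t1 t2 - Pm.@[coords (pt w w' z t1 t2)].
  rewrite /Q mevalB; congr (_ - _); [exact: (esym (hGe t1 t2)) | exact: hHe].
have hnz : (Q.@[ev2 0 0] != 0) || (Q.@[ev2 0 1] != 0).
  rewrite !hQe pt00 pt01 !subr_eq0.
  move: hne0; rewrite e0 !gfun_pt // !mulr0 !add0r xpair_eqE negb_and; exact.
apply: leq_trans (count2 hQd hnz).
apply: (leq_trans _ (leq_imset_card (fun t : F * F => pt w w' z t.1 t.2) _)).
apply: subset_leq_card; apply/subsetP => x; rewrite inE => /andP [hb /imsetP [[s u]]].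
rewrite inE /= => hs ex; subst x.
apply/imsetP; exists (s, u) => //; rewrite inE /= hs hQe subr_eq0 /=.
rewrite inE in hb; case/and3P: hb => _ /eqP h1 _.
by move: h1; rewrite gfun_pt // !mulr1 addr0 => ->.
Qed.

Lemma dcount (F : finFieldType) d (w w' : 'rV[F]_d) (B : {set 'rV[F]_d}) K :
  (forall z, #|B :&: Tset w w' z| <= K)%N ->
  (#|B :&: [set z | indepb w w' z]| * (#|F| * #|F|.-1) <= #|'rV[F]_d| * K)%N.
Proof.
move=> hK; set B' := B :&: _.
have e1 : (\sum_(z' in B') #|Tset w w' z'| = #|B'| * (#|F| * #|F|.-1))%N.
  rewrite -sum_nat_const; apply: eq_bigr => z'; rewrite !inE => /andP [_ hi].
  exact: card_T.
have e2 : (\sum_(z' in B') #|Tset w w' z'| = \sum_z #|B' :&: Tset w w' z|)%N.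
  under eq_bigr => z' _ do rewrite -sum1_card.
  rewrite (exchange_big_dep xpredT) //=; apply: eq_bigr => z _.
  rewrite -sum1_card; apply: eq_bigl => z'; rewrite !inE.
  case: (z' \in B) => //=; case: (indepb w w' z') => //=.
  by apply/idP/idP => /T_sym.
rewrite -e1 e2.
have h3 : forall z, (#|B' :&: Tset w w' z| <= K)%N.
  move=> z; apply: leq_trans (hK z).
  by apply: subset_leq_card; apply: setSI; apply: subsetIl.
apply: (@leq_trans (\sum_(z : 'rV[F]_d) K)); first by apply: leq_sum => z _; exact: h3.
by rewrite sum_nat_const.
Qed.

Lemma final_ineq (G Bd Qd X : nat) : (0 < Qd)%N -> (0 < X)%N -> (G + Bd = Qd)%N ->
  (Bd * X <= Qd)%N -> 1 - 1 / X%:R <= G%:R / Qd%:R :> rat.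
Proof.
move=> hQ hX hG hB.
have -> : G = (Qd - Bd)%N by lia.
have hBQ : (Bd <= Qd)%N by nia.
rewrite natrB // mulrBl divff ?pnatr_eq0 -?lt0n //.
rewrite lerD2l lerN2 ler_pdivrMr ?ltr0n // mul1r mulrC ler_pdivlMr ?ltr0n //.
by rewrite -natrM ler_nat.
Qed.

Lemma numeric (Bd b q1 Z X D1 : nat) : (1 <= q1)%N -> (2 <= X)%N ->
  (D1.+1 * X = q1.+1)%N -> (q1.+1 * q1.+1 <= Z)%N -> (Bd <= b + q1.+1)%N ->
  (b * (q1.+1 * q1) <= q1.+1 * Z * (D1 * q1.+1))%N ->
  (Bd * X <= q1.+1 * Z)%N.
Proof.
move=> hq hX hDX hZ hBd hb.
have hb' : (b * q1 <= q1.+1 * Z * D1)%N.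
  have : (q1.+1 * (b * q1) <= q1.+1 * (q1.+1 * Z * D1))%N.
    have -> : (q1.+1 * (b * q1) = b * (q1.+1 * q1))%N by ring.
    have -> : (q1.+1 * (q1.+1 * Z * D1) = q1.+1 * Z * (D1 * q1.+1))%N by ring.
    exact: hb.
  by rewrite leq_pmul2l.
have hXD : (X * D1 = q1.+1 - X)%N.
  by rewrite mulnC -hDX mulSn addKn.
have hXq : (X <= q1.+1)%N by rewrite -hDX mulSn leq_addr.
suff : ((b + q1.+1) * X * q1 <= q1.+1 * Z * q1)%N.
  rewrite leq_pmul2r; last by lia.
  move=> h; apply: leq_trans h; by rewrite leq_mul2r hBd orbT.
have e1 : ((b + q1.+1) * X * q1 = X * (b * q1) + X * q1.+1 * q1)%N by ring.
rewrite e1.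
have h1 : (X * (b * q1) <= q1.+1 * Z * (q1.+1 - X))%N.
  apply: leq_trans (leq_mul (leqnn X) hb') _.
  rewrite -hXD; have -> : (X * (q1.+1 * Z * D1) = q1.+1 * Z * (X * D1))%N by ring.
  by [].
have h2 : (X * q1 <= Z * (X - 1))%N.
  have h4 : (q1.+1 * q1.+1 * (X - 1) <= Z * (X - 1))%N by rewrite leq_mul2r hZ orbT.
  apply: leq_trans h4.
  have h5 : (X * q1 <= (2 * q1) * (X - 1))%N.
    have -> : (2 * q1 * (X - 1) = (2 * (X - 1)) * q1)%N by ring.
    rewrite leq_mul2r; apply/orP; right; lia.
  apply: leq_trans h5 _; rewrite leq_mul2r; apply/orP; right.
  have -> : (q1.+1 * q1.+1 = q1 * q1 + 2 * q1 + 1)%N by ring.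
  lia.
have e2 : (q1.+1 * Z * (q1.+1 - X) + q1.+1 * (Z * (X - 1)) = q1.+1 * Z * q1)%N.
  have e3 : (q1.+1 - X + (X - 1) = q1)%N by lia.
  by rewrite mulnA -mulnDr e3.
have h3 : (X * q1.+1 * q1 <= q1.+1 * (Z * (X - 1)))%N.
  have -> : (X * q1.+1 * q1 = q1.+1 * (X * q1))%N by ring.
  by rewrite leq_pmul2l.
rewrite -e2; exact: leq_add h1 h3.
Qed.

Lemma numeric' (Bd b q Z X D : nat) : (2 <= q)%N -> (2 <= X)%N -> (1 <= D)%N ->
  (D * X = q)%N -> (q * q <= Z)%N -> (Bd <= b + q)%N ->
  (b * (q * q.-1) <= q * Z * (D.-1 * q))%N -> (Bd * X <= q * Z)%N.
Proof.
move=> hq hX hD; case: q hq => [//|q1] hq; case: D hD => [//|D1] _ hDX hZ hBd hb.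
exact: (numeric (D1 := D1) (b := b)).
Qed.

Theorem mainTheorem4
  (k n d : nat) (F : finFieldType) (c a0 : nat) (H : {set F})
  (pi : 'rV[F]_d -> 'I_(2 ^ n))
  (hn : n = (2 ^ k)%N) (hk : ~~ odd k) (hn4 : (4 < n)%N)
  (hd : (d * k = 2 * n)%N)
  (hc : (2 <= c)%N) (hF : #|F| = (2 ^ a0)%N) (hFc : #|F| = (n ^ c)%N)
  (hH : #|H| = (2 ^ k./2)%N)
  (hpi_inj : {in cube d H &, injective pi})
  (hpi_onto : pi @: cube d H = [set: 'I_(2 ^ n)])
  (a : 'I_(2 ^ n) -> F) (P : {mpoly F[d]}) (hP : is_LDE H pi a P)
  (w w' : 'rV[F]_d) (hww : w != w') :
  let Atil := fun z : 'rV[F]_d => P.@[coords z] in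
  let D := (n * 2 ^ k./2)%N (* = n^1.5 *) in
  (exists r : strategy F d,
     prob_z (fun z => alice_output D Atil r w w' z == Some (Atil w, Atil w')) = 1)
  /\
  (forall r : strategy F d,
     prob_z (fun z => (alice_output D Atil r w w' z == Some (Atil w, Atil w'))
                      || (alice_output D Atil r w w' z == None))
     >= 1 - 1 / ((n ^ (c - 2) * 2 ^ k./2)%N)%:R (* 1 - 1/n^(c-1.5) *)).
Proof.
move=> Atil D.
set h := (2 ^ k./2)%N.
have hk3 : (2 < k)%N.
  rewrite ltnNge; apply/negP => hk2.
  have : (2 ^ k <= 2 ^ 2)%N by rewrite leq_pexp2l.
  lia.
have hk2 : (k./2.*2 = k)%N by rewrite halfK (negbTE hk) subn0.
have hh : (h * h = n)%N.
  by rewrite /h -expnD addnn hk2 hn.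
have hh2 : (2 <= h)%N.
  rewrite /h; have : (1 <= k./2)%N by move: hk2; rewrite -muln2; lia.
  move=> h1; have : (2 ^ 1 <= 2 ^ k./2)%N by rewrite leq_pexp2l.
  by rewrite expn1.
have hdn : (d <= n)%N.
  have : (2 * d <= d * k)%N by rewrite mulnC leq_mul2l ltnW ?orbT.
  lia.
have hd3 : (3 <= d)%N.
  rewrite leqNgt; apply/negP => hd2.
  have hkk : (k < 2 ^ k)%N by apply: ltn_expl.
  have : (d * k <= 2 * k)%N by rewrite leq_mul2r; apply/orP; right; lia.
  lia.
have hPD : (msize P <= D)%N.
  apply: msize_le_mdeg => m hm; rewrite mdegE.
  apply: (@leq_trans (\sum_(i < d) #|H|.-1).+1).
    rewrite ltnS; apply: leq_sum => i _; exact: hP.1 m hm i.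
  rewrite sum_nat_const card_ord hH -/h /D.
  have : (d * h.-1 < n * h)%N.
    apply: (@leq_trans (n * h.-1).+1); first by rewrite ltnS leq_mul2r hdn orbT.
    have -> : h = (h.-1).+1 by lia.
    rewrite /= mulnS; lia.
  by [].
have hq0 : (0 < #|F|)%N by rewrite hF expn_gt0.
split.
  pose r0 : strategy F d := fun _ x => Atil x.
  exists r0.
  have hall z : alice_output D Atil r0 w w' z == Some (Atil w, Atil w').
    have [Hz [hHd hHe]] := honest w w' z P.
    have hpoly : poly2_deg_lt D (gfun r0 w w' z).
      apply: (poly2_of (Q := Hz)); first exact: leq_trans hHd hPD.
      by move=> t1 t2; rewrite hHe.
    have e10 : gfun r0 w w' z 1 0 = Atil z.
      by rewrite /gfun /r0; congr Atil; exact: (pt10 w w' z).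
    have e00 : gfun r0 w w' z 0 0 = Atil w.
      by rewrite /gfun /r0; congr Atil; exact: (pt00 w w' z).
    have e01 : gfun r0 w w' z 0 1 = Atil w'.
      by rewrite /gfun /r0; congr Atil; exact: (pt01 w w' z).
    by rewrite /alice_output (decPI hpoly) e10 e00 e01 eqxx.
  rewrite /prob_z.
  have -> : [set z | alice_output D Atil r0 w w' z == Some (Atil w, Atil w')] = setT.
    by apply/setP => z; rewrite !inE hall.
  by rewrite cardsT card_mx mul1n divff // pnatr_eq0 -lt0n expn_gt0 hq0.
move=> r.
pose ev z := (alice_output D Atil r w w' z == Some (Atil w, Atil w'))
               || (alice_output D Atil r w w' z == None).
pose BB := [set z | badp D Atil r w w' z].
have hsub : [set z | ~~ ev z] \subset BB.
  apply/subsetP => z; rewrite !inE /ev /alice_output.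
  case: ifP => [/andP [hd1 h1] | _]; last by rewrite eqxx orbT.
  rewrite orbF => hne; rewrite /badp hd1 h1 /=.
  by move: hne; apply: contra => /eqP ->.
have hBB : (#|BB| <= #|BB :&: [set z | indepb w w' z]| + #|[set z | ~~ indepb w w' z]|)%N.
  apply: leq_trans (leq_card_setU _ _); apply: subset_leq_card; apply/subsetP => z hz.
  rewrite !inE; rewrite inE in hz; rewrite hz /=; by case: (indepb w w' z).
have hdc := dcount (@perz _ _ w w' r P D hPD).
rewrite card_mx mul1n in hdc.
have hni := card_nonindep hww.
have hGB : (#|[set z | ev z]| + #|[set z | ~~ ev z]| = #|F| ^ d)%N.
  have -> : [set z | ~~ ev z] = ~: [set z | ev z] by apply/setP => z; rewrite !inE.
  by rewrite cardsC card_mx mul1n.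
have hdp : d = d.-1.+1 by lia.
have hqd : (#|F| ^ d = #|F| * #|F| ^ d.-1)%N by rewrite {1}hdp expnS.
have hX2 : (2 <= n ^ (c - 2) * 2 ^ k./2)%N.
  apply: leq_trans hh2 _; rewrite leq_pmull // expn_gt0; lia.
have hDX : (D * (n ^ (c - 2) * 2 ^ k./2) = #|F|)%N.
  rewrite hFc (_ : (D * (n ^ (c - 2) * 2 ^ k./2) = n ^ (c - 2) * n * (h * h))%N);
    last by rewrite /D /h; ring.
  rewrite hh -!expnSr; congr (expn n _); lia.
have hF2 : (2 <= #|F|)%N.
  rewrite hFc; have : (n ^ 1 <= n ^ c)%N by rewrite leq_pexp2l //; lia.
  rewrite expn1; lia.
have hZ : (#|F| * #|F| <= #|F| ^ d.-1)%N.
  have : (#|F| ^ 2 <= #|F| ^ d.-1)%N by rewrite leq_pexp2l //; lia.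
  by rewrite expnS expn1.
rewrite /prob_z; apply: (@final_ineq _ #|[set z | ~~ ev z]|).
- by rewrite expn_gt0 hq0.
- lia.
- exact: hGB.
have hD1 : (1 <= D)%N by rewrite /D muln_gt0 expn_gt0; lia.
have hBd : (#|[set z | ~~ ev z]| <= #|BB :&: [set z | indepb w w' z]| + #|F|)%N.
  apply: leq_trans (subset_leq_card hsub) _; apply: leq_trans hBB _.
  by rewrite leq_add2l.
rewrite hqd in hdc.
rewrite hqd; exact: (numeric' hF2 hX2 hD1 hDX hZ hBd hdc).
Qed.
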